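(* For every $\varphi \in \Lambda^2_+\mathbb{R}^8$ and all $k,l \in \{1,\dots,8\}$, \[2 \, P_+ \big( e_k \wedge (i_{e_l}\varphi) + e_l \wedge (i_{e_k}\varphi) \big) = \delta_{kl}\,\varphi,\] where $e_1,\dots,e_8$ is the standard orthonormal basis of $\mathbb{R}^8$ (identified with the dual basis via the Euclidean metric), $i_X$ denotes interior multiplication, and $P_+$ is the projection onto $\Lambda^2_+\mathbb{R}^8$ defined in the context.
   Context: Write $\mathbb{R}^8 = E \oplus E^\perp$ with orthonormal basis $e_1,\dots,e_4$ of $E$ and $e_1^\perp,\dots,e_4^\perp$ of $E^\perp$, and set $e_5=e_1^\perp, e_6=e_2^\perp, e_7=e_3^\perp, e_8=e_4^\perp$. The $4$-form $\Omega$ is $\Omega = -e_1 e_2 e_1^\perp e_2^\perp - e_1 e_2 e_3^\perp e_4^\perp - e_3 e_4 e_1^\perp e_2^\perp - e_3 e_4 e_3^\perp e_4^\perp + e_1 e_3 e_2^\perp e_4^\perp - e_1 e_3 e_1^\perp e_3^\perp - e_2 e_4 e_2^\perp e_4^\perp + e_2 e_4 e_1^\perp e_3^\perp - e_1 e_4 e_2^\perp e_3^\perp - e_1 e_4 e_1^\perp e_4^\perp - e_2 e_3 e_2^\perp e_3^\perp - e_2 e_3 e_1^\perp e_4^\perp + e_1 e_2 e_3 e_4 + e_1^\perp e_2^\perp e_3^\perp e_4^\perp$, where juxtaposition denotes wedge product. Let $*$ be the Euclidean Hodge star (orientation $e_1\wedge\dots\wedge e_4\wedge e_1^\perp\wedge\dots\wedge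 e_4^\perp$). Define $\Lambda^2_+\mathbb{R}^8 = \{\varphi: 3\varphi - *(\Omega\wedge\varphi)=0\}$ (dimension 7) and $\Lambda^2_-\mathbb{R}^8=\{\varphi: \varphi + *(\Omega\wedge\varphi)=0\}$ (dimension 21); then $\Lambda^2\mathbb{R}^8=\Lambda^2_+\oplus\Lambda^2_-$ and the projection onto $\Lambda^2_+$ is $P_+\varphi = \frac14(\varphi + *(\Omega\wedge\varphi))$. *)

(* Defs.v *)
(* Concrete exterior algebra of R^8 with standard basis
   e_0,...,e_7 (0-based; the paper's e_1..e_8 are e_0..e_7 here). *)
From HB Require Import structures.
From mathcomp Require Import all_boot all_order all_algebra.
Set Implicit Arguments. Unset Strict Implicit. Unset Printing Implicit Defensive.
Import Order.TTheory GRing.Theory Num.Theory.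
Local Open Scope ring_scope.

Section Ext.
Variable R : realFieldType.

(* An element of the full exterior algebra Λ R^8: coefficient of e_S
   (S = {s_1 < ... < s_p}, e_S = e_{s_1} ∧ ... ∧ e_{s_p}) for each S. *)
Local Notation form := {ffun {set 'I_8} -> R}.

Definition is_pform (p : nat) (a : form) : Prop :=
  forall S : {set 'I_8}, #|S| != p -> a S = 0.

(* sign of e_A ∧ e_B = sgn A B * e_{A ∪ B} for disjoint A B *)
Definition sgn (A B : {set 'I_8}) : R :=
  (-1) ^+ #|[set p : 'I_8 * 'I_8 | [&& p.1 \in A, p.2 \in B & (val p.2 < val p.1)%N]]|.

Definition wedge (a b : form) : form :=
  [ffun S : {set 'I_8} =>
     \sum_(A : {set 'I_8} | A \subset S) sgn A (S :\: A) * a A * b (S :\: A)].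

Definition e (i : 'I_8) : form := [ffun S : {set 'I_8} => (S == [set i])%:R].

Definition iprod (l : 'I_8) (a : form) : form :=
  [ffun T : {set 'I_8} =>
     if l \in T then 0
     else (-1) ^+ #|[set t in T | (val t < val l)%N]| * a (l |: T)].

(* Euclidean Hodge star, orientation e_0 ∧ ... ∧ e_7:
   * e_A = sgn A A^c e_{A^c} *)
Definition hodge (a : form) : form :=
  [ffun S : {set 'I_8} => sgn (~: S) S * a (~: S)].

(* paper indexing: b i = e_i for i in 1..8 *)
Definition b (i : nat) : form := e (inord i.-1).
Definition w4 (i j k l : nat) : form := wedge (wedge (wedge (b i) (b j)) (b k)) (b l).

(* e_5..e_8 = e_1^perp..e_4^perp *)
Definition Omega : form :=
  - w4 1 2 5 6 - w4 1 2 7 8 - w4 3 4 5 6 - w4 3 4 7 8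
  + w4 1 3 6 8 - w4 1 3 5 7 - w4 2 4 6 8 + w4 2 4 5 7
  - w4 1 4 6 7 - w4 1 4 5 8 - w4 2 3 6 7 - w4 2 3 5 8
  + w4 1 2 3 4 + w4 5 6 7 8.

Definition sc (c : R) (a : form) : form := [ffun S : {set 'I_8} => c * a S].

Definition in_L2plus (phi : form) : Prop :=
  is_pform 2 phi /\ sc 3%:R phi - hodge (wedge Omega phi) = 0.

Definition Pplus (phi : form) : form := sc 4%:R^-1 (phi + hodge (wedge Omega phi)).

End Ext.

(* Main.v *)
From Pilot Require Import Defs.
From HB Require Import structures.
From Stdlib Require Import NArith Lia.
From mathcomp Require Import all_boot all_order all_algebra.
From mathcomp Require Import ring.
Import Order.TTheory GRing.Theory Num.Theory.
Local Open Scope ring_scope.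
Set Implicit Arguments. Unset Strict Implicit. Unset Printing Implicit Defensive.


Definition tb (m : N) (i : nat) : bool := N.testbit m (N.of_nat i).
Definition bit (i : nat) : N := N.pow 2 (N.of_nat i).
Definition subc (q m : N) : bool := N.eqb (N.ldiff (N.land q 255) m) 0.
Definition eqc (m n : N) : bool := N.eqb (N.land m 255) (N.land n 255).
Definition compc (m : N) : N := N.lxor m 255.
Definition cntc (a b : N) : nat :=
  count (fun p : nat * nat => [&& tb a p.1, tb b p.2 & (p.2 < p.1)%N])
    [seq (x, y) | x <- iota 0 8, y <- iota 0 8].
Definition sgnc (a b : N) : rat := if odd (cntc a b) then -1 else 1.
Definition tsgc (l : nat) (m : N) : rat := (-1) ^+ count (fun n => tb m n && (n < l)%N) (iota 0 8).

Definition s4 (i j k l : nat) : rat :=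
  let a := bit i.-1 in let b := bit j.-1 in let c := bit k.-1 in let d := bit l.-1 in
  sgnc a b * sgnc (N.lor a b) c * sgnc (N.lor (N.lor a b) c) d.
Definition Q4 (i j k l : nat) : N :=
  N.lor (N.lor (N.lor (bit i.-1) (bit j.-1)) (bit k.-1)) (bit l.-1).
Definition q4 (c : rat) i j k l := (c * s4 i j k l, Q4 i j k l).

Definition qlist : seq (rat * N) :=
  [:: q4 (-1) 1 2 5 6; q4 (-1) 1 2 7 8; q4 (-1) 3 4 5 6; q4 (-1) 3 4 7 8;
      q4 1 1 3 6 8; q4 (-1) 1 3 5 7; q4 (-1) 2 4 6 8; q4 1 2 4 5 7;
      q4 (-1) 1 4 6 7; q4 (-1) 1 4 5 8; q4 (-1) 2 3 6 7; q4 (-1) 2 3 5 8;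
      q4 1 1 2 3 4; q4 1 5 6 7 8].

Definition lin := seq (rat * N).
Definition scale (c : rat) (L : lin) : lin := [seq (c * p.1, p.2) | p <- L].
Definition geny1 (k l : nat) (X : N) : lin :=
  if tb X k then
    let Y := N.ldiff X (bit k) in
    if tb Y l then [::]
    else [:: (sgnc (bit k) Y * tsgc l Y, N.lor (bit l) Y)]
  else [::].
Definition geny k l X := geny1 k l X ++ geny1 l k X.
Definition genOm (qs : lin) (g : N -> lin) (X : N) : lin :=
  flatten [seq if subc q.2 X then scale (q.1 * sgnc q.2 (N.ldiff X q.2)) (g (N.ldiff X q.2))
               else [::] | q <- qs].
Definition genF (qs : lin) (k l : nat) (s : N) : lin :=
  scale (1/2) (geny k l s ++ scale (sgnc (compc s) s) (genOm qs (geny k l) (compc s))).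
Definition genH (qs : lin) (u : N) : lin :=
  (3%:R, u) :: scale (- sgnc (compc u) u) (genOm qs (fun z => [:: (1, z)]) (compc u)).
Definition cert (qs : lin) (k l : nat) (s : N) : lin :=
  let D := genF qs k l s ++ [:: (- (k == l)%:R, s)] in
  D ++ (if count (tb s) (iota 0 8) == 2%N then
          flatten [seq scale (- (p.1 / 4%:R)) (genH qs p.2) | p <- D]
        else [::]).
Definition coef (L : lin) (t : N) : rat :=
  foldr (fun p acc => if eqc p.2 t then p.1 + acc else acc) 0 L.
Definition ts : seq N :=
  flatten [seq [seq N.lor (bit i) (bit j) | j <- iota 0 8 & i != j] | i <- iota 0 8].
Definition check : bool :=
  let qs := qlist in let tl := ts in
  all (fun k => all (fun l => all (fun s =>
     let L := cert qs k l (N.of_nat s) in all (fun t => coef L t == 0%R) tl) (iota 0 256))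
     (iota 0 8)) (iota 0 8).


Definition toset (m : N) : {set 'I_8} := [set i : 'I_8 | tb m i].

Lemma in_toset m (i : 'I_8) : (i \in toset m) = tb m i.
Proof. by rewrite inE. Qed.

Lemma tb_ldiff a b i : tb (N.ldiff a b) i = tb a i && ~~ tb b i.
Proof. by rewrite /tb N.ldiff_spec. Qed.
Lemma tb_lor a b i : tb (N.lor a b) i = tb a i || tb b i.
Proof. by rewrite /tb N.lor_spec. Qed.
Lemma tb_land a b i : tb (N.land a b) i = tb a i && tb b i.
Proof. by rewrite /tb N.land_spec. Qed.
Lemma tb_lxor a b i : tb (N.lxor a b) i = xorb (tb a i) (tb b i).
Proof. by rewrite /tb N.lxor_spec. Qed.
Lemma tb0 i : tb 0 i = false.
Proof. by rewrite /tb N.bits_0. Qed.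

Lemma tb255 i : tb 255 i = (i < 8)%N.
Proof.
case: (ltnP i 8) => hi.
  by do 8! (case: i hi => [|i] hi; first by []).
rewrite /tb N.bits_above_log2 //.
change (N.lt 7 (N.of_nat i)); move/ssrnat.leP: hi => hi; lia.
Qed.

Lemma tb_bit k i : tb (bit k) i = (k == i).
Proof.
rewrite /tb /bit N.pow2_bits_eqb.
apply/idP/eqP => [/N.eqb_eq/Nat2N.inj //|->]; exact/N.eqb_eq.
Qed.

Lemma N_ext (a b : N) : (forall i : nat, tb a i = tb b i) -> a = b.
Proof.
move=> h; apply/N.bits_inj_iff => n.
by have := h (N.to_nat n); rewrite /tb N2Nat.id.
Qed.

Lemma toset_ldiff a b : toset (N.ldiff a b) = toset a :\: toset b.
Proof. by apply/setP => i; rewrite !inE tb_ldiff andbC. Qed.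
Lemma toset_lor a b : toset (N.lor a b) = toset a :|: toset b.
Proof. by apply/setP => i; rewrite !inE tb_lor. Qed.
Lemma toset_comp m : toset (compc m) = ~: toset m.
Proof.
apply/setP => i; rewrite !inE /compc tb_lxor tb255 ltn_ord.
by case: tb.
Qed.
Lemma set1_bit (k : 'I_8) : [set k] = toset (bit k).
Proof. by apply/setP => i; rewrite !inE tb_bit eq_sym. Qed.

Lemma subc_ok q m : subc q m = (toset q \subset toset m).
Proof.
rewrite /subc; apply/idP/subsetP.
- move/N.eqb_eq => h i; rewrite !in_toset => hq.
  have E : tb (N.ldiff (N.land q 255) m) i = tb 0 i by rewrite h.
  rewrite tb_ldiff tb_land tb255 ltn_ord hq tb0 /= in E.
  by move: E; case: tb.
- move=> h; apply/N.eqb_eq/N_ext => i; rewrite tb0 tb_ldiff tb_land tb255.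
  case: (ltnP i 8) => hi; last by rewrite andbF.
  have := h (Ordinal hi); rewrite !in_toset /=.
  by case: (tb q i) => //= ->.
Qed.

Lemma eqc_ok m n : eqc m n = (toset m == toset n).
Proof.
rewrite /eqc; apply/idP/eqP.
- move/N.eqb_eq => h; apply/setP => i; rewrite !in_toset.
  have E : tb (N.land m 255) i = tb (N.land n 255) i by rewrite h.
  by rewrite !tb_land tb255 ltn_ord !andbT in E.
- move=> h; apply/N.eqb_eq/N_ext => i; rewrite !tb_land tb255.
  case: (ltnP i 8) => hi; last by rewrite !andbF.
  have := congr1 (fun A : {set 'I_8} => Ordinal hi \in A) h; by rewrite !in_toset /= => ->.
Qed.

Lemma disjc_ok a b : N.land a b = 0%num -> [disjoint toset a & toset b].
Proof.
move=> h; rewrite disjoint_subset; apply/subsetP => i; rewrite in_toset inE in_toset => ha.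
apply/negP => hb.
have E : tb (N.land a b) i = tb 0 i by rewrite h.
by rewrite tb_land ha hb tb0 in E.
Qed.

Section R.
Variable R : realFieldType.

Lemma sgn_ok a b : sgn R (toset a) (toset b) = ratr (sgnc a b).
Proof.
rewrite /sgn /sgnc cardsE cardE /enum_mem size_filter -signr_odd.
have -> : count (mem [pred x : 'I_8 * 'I_8 | [&& x.1 \in toset a, x.2 \in toset b
                                 & (val x.2 < val x.1)%N]])
             (Finite.enum _) = cntc a b.
  rewrite /cntc -val_enum_ord allpairs_mapl allpairs_mapr.
  have -> : [seq (val x, val y) | x <- enum 'I_8, y <- enum 'I_8] =
     map (fun p : 'I_8 * 'I_8 => (val p.1, val p.2)) [seq (x, y) | x <- enum 'I_8, y <- enum 'I_8].
    by rewrite map_allpairs.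
  rewrite count_map.
  have -> : Finite.enum ('I_8 * 'I_8)%type = prod_enum 'I_8 'I_8.
    by rewrite unlock.
  by apply: eq_count => -[x y]; rewrite /= !inE.
by case: odd; rewrite ?rmorphN1 ?rmorph1.
Qed.

Lemma tsg_ok (l : 'I_8) m :
  (-1) ^+ #|[set t in toset m | (val t < val l)%N]| = ratr (tsgc l m) :> R.
Proof.
rewrite /tsgc rmorphXn rmorphN1; congr (_ ^+ _).
rewrite cardsE cardE /enum_mem size_filter -enumT -val_enum_ord count_map.
by apply: eq_count => x; rewrite /= -in_toset.
Qed.

End R.


Section R.
Variable R : realFieldType.
Local Notation form := {ffun {set 'I_8} -> R}.

Definition eS (A : {set 'I_8}) : form := [ffun S => (S == A)%:R].

Lemma wedge_eSl (A : {set 'I_8}) (x : form) S :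
  wedge (eS A) x S = if A \subset S then sgn R A (S :\: A) * x (S :\: A) else 0.
Proof.
rewrite ffunE; case: ifP => hA.
- rewrite (bigD1 A) //= big1 ?addr0; first by rewrite ffunE eqxx mulr1.
  by move=> B /andP[_ nB]; rewrite ffunE (negbTE nB) mulr0 mul0r.
- rewrite big1 // => B hB; rewrite ffunE; case: eqP => [eBA|]; last by rewrite mulr0 mul0r.
  by subst; rewrite hB in hA.
Qed.

Lemma wedgeDl (a c x : form) : wedge (a + c) x = wedge a x + wedge c x.
Proof.
apply/ffunP => S; rewrite !ffunE -big_split; apply: eq_bigr => A _.
by rewrite ffunE mulrDr mulrDl.
Qed.

Lemma wedgeNl (a x : form) : wedge (- a) x = - wedge a x.
Proof.
apply/ffunP => S; rewrite !ffunE -sumrN; apply: eq_bigr => A _.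
by rewrite ffunE mulrN mulNr.
Qed.

Lemma wedge0l (x : form) : wedge 0 x = 0.
Proof.
apply/ffunP => S; rewrite !ffunE big1 // => A _; by rewrite ffunE mulr0 mul0r.
Qed.

Lemma wedge_scl c (a x : form) : wedge (sc c a) x = sc c (wedge a x).
Proof.
apply/ffunP => S; rewrite !ffunE mulr_sumr; apply: eq_bigr => A _.
by rewrite ffunE mulrCA !mulrA.
Qed.

Lemma wedge_suml (I : Type) (r : seq I) (F : I -> form) x :
  wedge (\sum_(i <- r) F i) x = \sum_(i <- r) wedge (F i) x.
Proof.
elim: r => [|i r IH]; first by rewrite !big_nil wedge0l.
by rewrite !big_cons wedgeDl IH.
Qed.

Lemma sc_sc c d (a : form) : sc c (sc d a) = sc (c * d) a.
Proof. by apply/ffunP => S; rewrite !ffunE mulrA. Qed.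

Lemma setUDK (A S : {set 'I_8}) : A \subset S -> A :|: (S :\: A) = S.
Proof.
move=> /subsetP h; apply/setP => x; rewrite !inE.
by case: (boolP (x \in A)) => //= /h ->.
Qed.

Lemma wedge_eS2 (A B : {set 'I_8}) : [disjoint A & B] ->
  wedge (eS A) (eS B) = sc (sgn R A B) (eS (A :|: B)).
Proof.
move=> dAB; apply/ffunP => S; rewrite wedge_eSl !ffunE.
case: (boolP (A \subset S)) => hA.
- case: (eqVneq S (A :|: B)) => [->|hS].
  + by rewrite setDUl setDv set0U (setDidPl _) 1?disjoint_sym // eqxx.
  + suff -> : (S :\: A == B) = false by rewrite !mulr0.
    apply/negP => /eqP eSB; move/eqP: hS; apply.
    by rewrite -eSB setUDK.
- case: eqP => [eS'|]; last by rewrite mulr0.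
  by move: hA; rewrite eS' subsetUl.
Qed.


Lemma b_toset i : (i.-1 < 8)%N -> b R i = eS (toset (bit i.-1)).
Proof.
move=> hi; rewrite /b /e /eS set1_bit inordK //.
Qed.

Lemma w4E (i j k l : nat) : (i.-1 < 8)%N -> (j.-1 < 8)%N -> (k.-1 < 8)%N -> (l.-1 < 8)%N ->
  N.land (bit i.-1) (bit j.-1) = 0%num ->
  N.land (N.lor (bit i.-1) (bit j.-1)) (bit k.-1) = 0%num ->
  N.land (N.lor (N.lor (bit i.-1) (bit j.-1)) (bit k.-1)) (bit l.-1) = 0%num ->
  w4 R i j k l = sc (ratr (s4 i j k l)) (eS (toset (Q4 i j k l))).
Proof.
move=> hi hj hk hl d1 d2 d3.
rewrite /w4 !b_toset // wedge_eS2 ?disjc_ok // -toset_lor wedge_scl wedge_eS2 ?disjc_ok //.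
rewrite -toset_lor sc_sc wedge_scl wedge_eS2 ?disjc_ok // -toset_lor sc_sc.
rewrite /s4 /Q4 !sgn_ok !rmorphM; reflexivity.
Qed.

Lemma OmegaE : Omega R = \sum_(q <- qlist) sc (ratr q.1) (eS (toset q.2)).
Proof.
rewrite /Omega !w4E //.
rewrite /qlist !big_cons big_nil /q4 /=.
apply/ffunP => S; rewrite !ffunE !rmorphM !rmorphN1 !rmorph1.
ring.
Qed.

Lemma ffB (f g : form) x : (f - g) x = f x - g x.
Proof. by rewrite !ffunE. Qed.
Lemma ffD (f g : form) x : (f + g) x = f x + g x.
Proof. by rewrite !ffunE. Qed.
Lemma scE c (f : form) x : sc c f x = c * f x.
Proof. by rewrite !ffunE. Qed.

Definition ev (phi : form) (L : lin) : R := \sum_(p <- L) ratr p.1 * phi (toset p.2).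

Lemma ev_cat phi L1 L2 : ev phi (L1 ++ L2) = ev phi L1 + ev phi L2.
Proof. by rewrite /ev big_cat. Qed.
Lemma ev_nil phi : ev phi [::] = 0.
Proof. by rewrite /ev big_nil. Qed.
Lemma ev_cons phi p L : ev phi (p :: L) = ratr p.1 * phi (toset p.2) + ev phi L.
Proof. by rewrite /ev big_cons. Qed.
Lemma ev_scale phi c L : ev phi (scale c L) = ratr c * ev phi L.
Proof.
rewrite /ev /scale big_map mulr_sumr; apply: eq_bigr => p _.
by rewrite rmorphM mulrA.
Qed.
Lemma ev_flatten phi (T : Type) (f : T -> lin) s :
  ev phi (flatten [seq f q | q <- s]) = \sum_(q <- s) ev phi (f q).
Proof.
elim: s => [|q s IH]; first by rewrite big_nil ev_nil.
by rewrite /= ev_cat IH big_cons.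
Qed.

Lemma hodge_ok (a : form) s :
  hodge a (toset s) = ratr (sgnc (compc s) s) * a (toset (compc s)).
Proof. by rewrite ffunE -toset_comp sgn_ok. Qed.

Lemma geny1_ok (phi : form) (k l : 'I_8) x :
  wedge (e R k) (iprod l phi) (toset x) = ev phi (geny1 k l x).
Proof.
rewrite (_ : e R k = eS (toset (bit k))); last by rewrite /e /eS set1_bit.
rewrite wedge_eSl -set1_bit sub1set in_toset /geny1.
case: (tb x k); last by rewrite ev_nil.
rewrite set1_bit -toset_ldiff ffunE in_toset.
case: (tb _ l); first by rewrite mulr0 ev_nil.
rewrite ev_cons ev_nil addr0 /= tsg_ok set1_bit -toset_lor sgn_ok rmorphM.
by rewrite mulrA.
Qed.

Lemma geny_ok (phi : form) (k l : 'I_8) x :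
  (wedge (e R k) (iprod l phi) + wedge (e R l) (iprod k phi)) (toset x)
  = ev phi (geny k l x).
Proof. by rewrite ffunE /geny ev_cat !geny1_ok. Qed.

Lemma genOm_ok (phi y : form) (g : N -> lin) :
  (forall z, y (toset z) = ev phi (g z)) ->
  forall x, wedge (Omega R) y (toset x) = ev phi (genOm qlist g x).
Proof.
move=> hg x; rewrite OmegaE wedge_suml sum_ffunE /genOm ev_flatten.
apply: eq_bigr => q _; rewrite wedge_scl ffunE wedge_eSl -subc_ok.
case: subc; last by rewrite mulr0 ev_nil.
by rewrite ev_scale -toset_ldiff hg sgn_ok rmorphM mulrA.
Qed.

Definition coefT (L : lin) (T : {set 'I_8}) : rat :=
  foldr (fun p acc => if toset p.2 == T then p.1 + acc else acc) 0 L.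

Lemma ev_coefT phi L : ev phi L = \sum_(T : {set 'I_8}) ratr (coefT L T) * phi T.
Proof.
elim: L => [|p L IH].
  by rewrite ev_nil big1 // => T _; rewrite /= rmorph0 mul0r.
have E : forall T, ratr (coefT (p :: L) T) * phi T =
   (toset p.2 == T)%:R * (ratr p.1 * phi T) + ratr (coefT L T) * phi T.
  move=> T /=; case: eqP => _; first by rewrite rmorphD mul1r mulrDl.
  by rewrite mul0r add0r.
rewrite ev_cons IH (eq_bigr _ (fun T _ => E T)) big_split /=; congr (_ + _).
rewrite (bigD1 (toset p.2)) //= eqxx mul1r big1 ?addr0 // => T /negbTE.
by rewrite eq_sym => ->; rewrite mul0r.
Qed.

Lemma coefT_eq L t : coefT L (toset t) = coef L t.
Proof.
elim: L => [|p L IH] //=; by rewrite IH eqc_ok.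
Qed.

Lemma ts_mem (T : {set 'I_8}) : #|T| == 2%N -> exists2 t, t \in ts & toset t = T.
Proof.
case/cards2P => x [y [nxy ->]].
exists (N.lor (bit x) (bit y)); last by rewrite toset_lor -!set1_bit.
apply/flatten_mapP; exists (val x); first by rewrite mem_iota ltn_ord.
apply/mapP; exists (val y) => //.
rewrite mem_filter mem_iota /= ltn_ord andbT; exact: nxy.
Qed.

Lemma sound (phi : form) L : (forall T : {set 'I_8}, #|T| != 2%N -> phi T = 0) ->
  all (fun t => coef L t == 0) ts -> ev phi L = 0.
Proof.
move=> hp /allP ha; rewrite ev_coefT big1 // => T _.
case: (boolP (#|T| == 2%N)) => h; last by rewrite hp ?mulr0.
case: (ts_mem h) => t ht <-; rewrite coefT_eq (eqP (ha t ht)).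
by rewrite rmorph0 mul0r.
Qed.

Lemma genH_ok (phi : form) : sc 3%:R phi - hodge (wedge (Omega R) phi) = 0 ->
  forall u, ev phi (genH qlist u) = 0.
Proof.
move=> hm u.
have h1 : forall z, phi (toset z) = ev phi [:: (1, z)].
  by move=> z; rewrite ev_cons ev_nil addr0 rmorph1 mul1r.
have := congr1 (fun f : form => f (toset u)) hm.
rewrite /= ffB scE hodge_ok (genOm_ok h1) ffunE => E.
rewrite /genH ev_cons ev_scale rmorphN ratr_nat mulNr.
by rewrite -[RHS]E.
Qed.

End R.


Lemma check_ok : check = true.
Proof. vm_compute. reflexivity. Qed.

Definition codeN (S : {set 'I_8}) : N :=
  foldr (fun i acc => if i \in S then N.lor (bit i) acc else acc) 0%num (enum 'I_8).

Lemma tb_codeN S n : tb (codeN S) n = has (fun i : 'I_8 => (i \in S) && (val i == n)) (enum 'I_8).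
Proof.
rewrite /codeN; elim: (enum 'I_8) => [|i r IH] /=; first exact: tb0.
by case: (i \in S) => /=; rewrite ?tb_lor ?tb_bit IH.
Qed.

Lemma toset_surj (S : {set 'I_8}) : exists s, (s < 256)%N /\ toset (N.of_nat s) = S.
Proof.
exists (N.to_nat (N.land (codeN S) 255)); split.
  have h := N.land_le_r (codeN S) 255.
  apply/ssrnat.ltP; lia.
rewrite N2Nat.id; apply/setP => j; rewrite in_toset tb_land tb255 ltn_ord andbT tb_codeN.
apply/hasP/idP => [[i _ /andP[hi /eqP e]]|hj].
  by rewrite (_ : j = i) //; apply: val_inj.
by exists j; rewrite ?mem_enum // hj eqxx.
Qed.

Import Pilot.Defs.

Theorem lemma2p1 (R : realFieldType) (phi : {ffun {set 'I_8} -> R}) :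
  in_L2plus phi ->
  forall k l : 'I_8,
    sc 2%:R (Pplus (wedge (e R k) (iprod l phi) + wedge (e R l) (iprod k phi)))
    = sc (k == l)%:R phi.
Proof.
move=> [Hp Hm] k l; apply/ffunP => S.
have [s [hs <-]] := toset_surj S.
have H : all (fun t => coef (cert qlist k l (N.of_nat s)) t == 0) ts.
  have := check_ok; rewrite /check; cbv zeta.
  move/allP/(_ (val k)); rewrite mem_iota ltn_ord => /(_ isT).
  move/allP/(_ (val l)); rewrite mem_iota ltn_ord => /(_ isT).
  by move/allP/(_ s); rewrite mem_iota /= => /(_ hs).
have Hc := sound Hp H.
rewrite /cert ev_cat in Hc; cbv zeta in Hc.
have E2 : forall b : bool, ev phi (if b then flatten [seq scale (- (p.1 / 4%:R)) (genH qlist p.2)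
             | p <- genF qlist k l (N.of_nat s) ++ [:: (- (k == l :> nat)%:R, N.of_nat s)]]
       else [::]) = 0.
  case => /=; last exact: ev_nil.
  have Hg : forall c u, ev phi (scale c (genH qlist u)) = 0.
    by move=> c u; rewrite ev_scale (genH_ok Hm) mulr0.
  by rewrite ev_flatten big1 // => p _; apply: Hg.
rewrite E2 addr0 /genF ev_cat ev_scale ev_cat ev_scale ev_cons ev_nil addr0 in Hc.
rewrite scE /Pplus scE ffD hodge_ok (genOm_ok (geny_ok phi k l)) geny_ok scE.
have h2 : ratr (1/2 : rat) = (2%:R : R)^-1.
  by rewrite fmorph_div rmorph1 mul1r -(ratr_nat R 2).
rewrite h2 rmorphN rmorph_nat /= in Hc.
rewrite -[(nat_of_ord k == nat_of_ord l)]/(k == l) in Hc.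
apply/eqP; rewrite -subr_eq0 -[X in _ == X]Hc; apply/eqP.
by field.
Qed.
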